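(* Let $R$ be a ring and $M$ any $R$-module. There exists an inverse system of $R$-modules $(D_\alpha,g_{\alpha\beta}\mid\alpha\le\beta<\aleph_1)$ indexed by $\aleph_1$ (with the ordinal order) in which every $g_{\alpha\beta}$ is surjective, each $D_\alpha$ is a direct sum of copies of $M$, and $\varprojlim_{\alpha<\aleph_1}D_\alpha=0$. In particular, if $M\neq 0$, this inverse system is Mittag-Leffler but not strict Mittag-Leffler.
   Context: An inverse system $(D_i,g_{ij})$ with inverse limit $(D,g_i)$ is Mittag-Leffler if for each $i$ there is $j\ge i$ with $\operatorname{Im} g_{ij}=\operatorname{Im} g_{ik}$ for all $k\ge j$, and strict Mittag-Leffler if for each $i$ there is $j\ge i$ with $\operatorname{Im} g_{ij}=\operatorname{Im} g_i$. *)

(* Defs.v *)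
From HB Require Import structures.
From mathcomp Require Import all_boot all_order all_algebra.
Set Implicit Arguments. Unset Strict Implicit. Unset Printing Implicit Defensive.
Import GRing.Theory.
Local Open Scope ring_scope.

(** A type [A] with a strict relation [lt] has order type omega_1 iff
    [lt] is a strict well-order (irreflexive, transitive, total, well-founded),
    [A] is uncountable and every proper initial segment is countable. *)
Definition countable_set (A : Type) (P : A -> Prop) : Prop :=
  exists f : A -> nat, forall x y, P x -> P y -> f x = f y -> x = y.

Definition is_omega1 (A : Type) (lt : A -> A -> Prop) : Prop :=
  (forall a, ~ lt a a) /\
  (forall a b c, lt a b -> lt b c -> lt a c) /\
  (forall a b, lt a b \/ a = b \/ lt b a) /\
  well_founded lt /\
  ~ countable_set (fun _ : A => True) /\
  (forall a, countable_set (fun b => lt b a)).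

Definition ole (A : Type) (lt : A -> A -> Prop) (a b : A) : Prop :=
  a = b \/ lt a b.

(** * Inverse systems of R-modules indexed by (A, ole lt):
    D : A -> lmodType R, transition maps g a b : D b -> D a for a <= b
    (the value of g a b for a > b is irrelevant). *)
Definition inverse_system (R : pzRingType) (A : Type) (lt : A -> A -> Prop)
  (D : A -> lmodType R) (g : forall a b, {linear D b -> D a}) : Prop :=
  (forall a (x : D a), g a a x = x) /\
  (forall a b c, ole lt a b -> ole lt b c ->
     forall x : D c, g a b (g b c x) = g a c x).

(** Elements of the inverse limit: compatible threads. *)
Definition is_thread (R : pzRingType) (A : Type) (lt : A -> A -> Prop)
  (D : A -> lmodType R) (g : forall a b, {linear D b -> D a})
  (x : forall a, D a) : Prop :=
  forall a b, ole lt a b -> g a b (x b) = x a.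

Definition limit_is_zero (R : pzRingType) (A : Type) (lt : A -> A -> Prop)
  (D : A -> lmodType R) (g : forall a b, {linear D b -> D a}) : Prop :=
  forall x : forall a, D a, is_thread lt g x -> forall a, x a = 0.

(** Images: Im g_{ij} and Im g_i (g_i : lim D -> D_i the canonical map). *)
Definition im_g (R : pzRingType) (A : Type)
  (D : A -> lmodType R) (g : forall a b, {linear D b -> D a})
  (i j : A) (y : D i) : Prop := exists x : D j, g i j x = y.
Arguments im_g {R A D} g i j y.

Definition im_lim (R : pzRingType) (A : Type) (lt : A -> A -> Prop)
  (D : A -> lmodType R) (g : forall a b, {linear D b -> D a})
  (i : A) (y : D i) : Prop :=
  exists x : forall a, D a, is_thread lt g x /\ x i = y.
Arguments im_lim {R A} lt {D} g i y.

Definition mittag_leffler (R : pzRingType) (A : Type) (lt : A -> A -> Prop)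
  (D : A -> lmodType R) (g : forall a b, {linear D b -> D a}) : Prop :=
  forall i, exists j, ole lt i j /\
    forall k, ole lt j k -> forall y : D i, im_g g i j y <-> im_g g i k y.

Definition strict_mittag_leffler (R : pzRingType) (A : Type) (lt : A -> A -> Prop)
  (D : A -> lmodType R) (g : forall a b, {linear D b -> D a}) : Prop :=
  forall i, exists j, ole lt i j /\
    forall y : D i, im_g g i j y <-> im_lim lt g i y.

(** * D is (isomorphic to) a direct sum of copies of M:
    there are an index type I and linear maps e i : M -> D such that the map
    (m_i)_i |-> sum_i e i (m_i) from the finitely supported families
    M^(I) to D is bijective. *)
Definition fin_supp (R : pzRingType) (M : lmodType R) (I : eqType)
  (m : I -> M) (s : seq I) : Prop :=
  uniq s /\ forall i, i \notin s -> m i = 0.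

Definition is_direct_sum_of_copies (R : pzRingType) (M D : lmodType R) : Prop :=
  exists (I : eqType) (e : I -> {linear M -> D}),
    (forall d : D, exists (m : I -> M) (s : seq I),
        fin_supp m s /\ d = \sum_(i <- s) e i (m i)) /\
    (forall (m m' : I -> M) (s s' : seq I),
        fin_supp m s -> fin_supp m' s' ->
        \sum_(i <- s) e i (m i) = \sum_(i <- s') e i (m' i) -> m = m').

(* Main.v *)
Require Import Defs.
From HB Require Import structures.
From mathcomp Require Import all_boot all_order all_algebra.
From mathcomp Require Import boolp functions zify.
Set Implicit Arguments. Unset Strict Implicit. Unset Printing Implicit Defensive.
Import GRing.Theory.
Local Open Scope ring_scope.

Section Constr.
Variables (R : pzRingType) (M : lmodType R) (A : Type) (lt : A -> A -> Prop).

Definition W := A -> option nat.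
Definition finsupp (f : W -> M) := exists s : seq W, forall w, w \notin s -> f w = 0.
Definition Pa (a : A) (u : W) :=
  [/\ (forall b, lt b a <-> u b <> None),
      (forall b b' n, u b = Some n -> u b' = Some n -> b = b') &
      (forall N, exists n, (N <= n)%N /\ forall b, u b <> Some n)].
Definition fsq (a : A) : {pred W -> M} :=
  fun f => `[< finsupp f /\ forall w, ~ Pa a w -> f w = 0 >].

Lemma fsq_closed a : subsemimod_closed (fsq a).
Proof.
split; [split|].
- apply/asboolP; split; [by exists [::] | by []].
- move=> f g /asboolP [[s Hs] Hf] /asboolP [[t Ht] Hg]; apply/asboolP; split.
    exists (s ++ t) => w; rewrite mem_cat negb_or => /andP [h1 h2].
    by rewrite [LHS]/GRing.add /= Hs // Ht // addr0.
  by move=> w hw; rewrite [LHS]/GRing.add /= Hf // Hg // addr0.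
- move=> k f /asboolP [[s Hs] Hf]; apply/asboolP; split.
    by exists s => w hw; rewrite [LHS]/GRing.scale /= Hs // scaler0.
  by move=> w hw; rewrite [LHS]/GRing.scale /= Hf // scaler0.
Qed.
HB.instance Definition _ a := GRing.isSubmodClosed.Build R (W -> M) (fsq a) (fsq_closed a).

Inductive Dty (a : A) : predArgType := DMk (f : W -> M) & f \in fsq a.
Definition dval a (x : Dty a) : W -> M := let: DMk f _ := x in f.
HB.instance Definition _ a := [isSub of Dty a for @dval a].
HB.instance Definition _ a := [Choice of Dty a by <:].
HB.instance Definition _ a := [SubChoice_isSubZmodule of Dty a by <:].
HB.instance Definition _ a := [SubZmodule_isSubLmodule of Dty a by <:].


Lemma dvalP a (x : Dty a) : finsupp (dval x) /\ forall w, ~ Pa a w -> dval x w = 0.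
Proof. by case: x => f hf; apply/asboolP. Qed.

Lemma dval_inj a : injective (@dval a). Proof. exact: val_inj. Qed.

Lemma supp_ex (f : W -> M) : finsupp f ->
  exists s : seq W, uniq s /\ forall w, (w \in s) = (f w != 0).
Proof.
move=> [s0 Hs0]; exists (undup [seq w <- s0 | f w != 0]); split; first exact: undup_uniq.
move=> w; rewrite mem_undup mem_filter; case fw: (f w != 0) => //=.
by apply/negPn/negP => /Hs0 h; rewrite h eqxx in fw.
Qed.

Definition supp (f : W -> M) : seq W :=
  match pselect (exists s : seq W, uniq s /\ forall w, (w \in s) = (f w != 0)) with
  | left h => projT1 (cid h) | right _ => [::] end.

Lemma suppP f : finsupp f -> uniq (supp f) /\ forall w, (w \in supp f) = (f w != 0).
Proof.
move=> /supp_ex h; rewrite /supp; case: pselect => [h'|//].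
exact: (projT2 (cid h')).
Qed.

Lemma sum_filter_nz (f : W -> M) (Q : pred W) s :
  \sum_(u <- s | Q u) f u = \sum_(u <- [seq u <- s | f u != 0] | Q u) f u.
Proof.
rewrite big_filter_cond (bigID (fun u => f u != 0)) /= [X in _ + X]big1 ?addr0.
  by apply: eq_bigl => u; rewrite andbC.
by move=> u /andP [_ /negbNE /eqP].
Qed.

Lemma sum_cover (f : W -> M) (Q : pred W) s : finsupp f -> uniq s ->
  (forall w, f w != 0 -> w \in s) ->
  \sum_(u <- s | Q u) f u = \sum_(u <- supp f | Q u) f u.
Proof.
move=> fs us cov; have [us' Hs'] := suppP fs.
rewrite [LHS]sum_filter_nz [RHS]sum_filter_nz; apply: perm_big.
apply: uniq_perm; rewrite ?filter_uniq // => w.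
rewrite mem_filter [in RHS]mem_filter Hs'.
by case h: (f w != 0) => //=; rewrite cov ?h.
Qed.

Definition r (a : A) (u : W) : W := fun b => if `[< lt b a >] then u b else None.

Definition gfun (a : A) (f : W -> M) : W -> M := fun v =>
  if `[< Pa a v >] then \sum_(u <- supp f | r a u == v) f u else 0.

Lemma gfun_fsq a f : finsupp f -> gfun a f \in fsq a.
Proof.
move=> fs; apply/asboolP; split; last first.
  by move=> w hw; rewrite /gfun; case: asboolP.
exists (map (r a) (supp f)) => w hw; rewrite /gfun; case: asboolP => // _.
rewrite big_seq_cond big1 // => u /andP [hu /eqP hr].
by move: hw; rewrite -hr map_f.
Qed.

Definition gmap a b (x : Dty b) : Dty a := DMk (gfun_fsq a (proj1 (dvalP x))).

Lemma gfun_lin a (k : R) f g : finsupp f -> finsupp g ->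
  gfun a (k *: f + g) = k *: gfun a f + gfun a g.
Proof.
move=> ff fg; have fkg : finsupp (k *: f + g).
  have := fsq_closed a; case=> [[_ hD] hZ].
  case: ff fg => s Hs [t Ht]; exists (s ++ t) => w; rewrite mem_cat negb_or.
  by case/andP=> h1 h2; change (k *: f w + g w = 0); rewrite Hs // Ht // scaler0 addr0.
have [us Hs] := suppP ff; have [ut Ht] := suppP fg.
set s := undup (supp f ++ supp g).
have us0 : uniq s by apply: undup_uniq.
have cov : forall h : W -> M, (forall w, h w != 0 -> f w != 0 \/ g w != 0) -> forall w, h w != 0 -> w \in s.
  move=> h hh w /hh; rewrite mem_undup mem_cat Hs Ht; by case=> ->; rewrite ?orbT.
apply/funext => v; change (gfun a (k *: f + g) v = k *: gfun a f v + gfun a g v); rewrite /gfun.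
case: asboolP => _; last by rewrite scaler0 addr0.
rewrite -(sum_cover _ fkg us0) ; last first.
  apply: cov => w; change (k *: f w + g w != 0 -> f w != 0 \/ g w != 0).
  case: (f w =P 0) => [->|/eqP]; last by left.
  by rewrite scaler0 add0r; right.
rewrite -(sum_cover _ ff us0); last by apply: cov => w; left.
rewrite -(sum_cover _ fg us0); last by apply: cov => w; right.
rewrite scaler_sumr -big_split /=; apply: eq_bigr => u _; done.
Qed.

Lemma gmap_is_linear a b : linear (@gmap a b).
Proof.
move=> k x y; apply: dval_inj => /=.
by rewrite gfun_lin //; [exact: (proj1 (dvalP x)) | exact: (proj1 (dvalP y))].
Qed.
HB.instance Definition _ a b := GRing.isSemilinear.Build R (Dty b) (Dty a) _ (@gmap a b)
  (GRing.semilinear_linear (@gmap_is_linear a b)).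

Definition gl a b : {linear Dty b -> Dty a} := @gmap a b.

Definition push (q : W -> W) (f : W -> M) : W -> M := fun v =>
  \sum_(u <- supp f | q u == v) f u.
Definition proj a (h : W -> M) : W -> M := fun v => if `[< Pa a v >] then h v else 0.

Lemma gfunE a f : gfun a f = proj a (push (r a) f). Proof. by []. Qed.

Lemma push_nz q f : finsupp f -> forall w, push q f w != 0 -> exists u, f u != 0 /\ q u = w.
Proof.
move=> fs w; have [us Hs] := suppP fs; rewrite /push.
case: (boolP (has (fun u => (q u == w) && (f u != 0)) (supp f))).
  by case/hasP => u _ /andP [/eqP h1 h2]; exists u.
move/hasPn => hn; rewrite big_seq_cond big1 ?eqxx // => u /andP [hu hq].
by have := hn u hu; rewrite hq /= => /negbNE /eqP.
Qed.

Lemma push_fs q f : finsupp f -> finsupp (push q f).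
Proof.
move=> fs; exists (map q (supp f)) => w; apply: contraNeq => /(push_nz fs) [u [hu <-]].
by apply: map_f; have [_ ->] := suppP fs.
Qed.

Lemma push_ext q q' f : finsupp f -> (forall u, f u != 0 -> q u = q' u) -> push q f = push q' f.
Proof.
move=> fs h; apply/funext => v; rewrite /push big_seq_cond [RHS]big_seq_cond.
apply: eq_bigl => u; case hu: (u \in supp f) => //=.
by have [_ Hs] := suppP fs; rewrite h // -Hs.
Qed.

Lemma sum_pick (s : seq W) (x : W) (F : W -> M) : uniq s -> x \in s ->
  \sum_(w <- s | w == x) F w = F x.
Proof. by move=> us xs; rewrite -big_filter filter_pred1_uniq // big_seq1. Qed.

Lemma sum_pick0 (s : seq W) (x : W) (F : W -> M) : x \notin s ->
  \sum_(w <- s | w == x) F w = 0.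
Proof.
move=> xs; rewrite big_seq_cond big1 // => w /andP [hw /eqP ex].
by move: xs; rewrite -ex hw.
Qed.

Lemma push_id q f : finsupp f -> (forall u, f u != 0 -> q u = u) -> push q f = f.
Proof.
move=> fs h; rewrite (push_ext fs h); apply/funext => v; rewrite /push.
have [us Hs] := suppP fs.
case hv: (v \in supp f); first by rewrite sum_pick.
by rewrite sum_pick0 ?hv //; move: hv; rewrite Hs => /negbT /negbNE /eqP.
Qed.

Lemma push_push q1 q2 f : finsupp f -> push q2 (push q1 f) = push (q2 \o q1) f.
Proof.
move=> fs; have [us Hs] := suppP fs; apply/funext => v.
set s' := undup (map q1 (supp f)).
have us' : uniq s' by apply: undup_uniq.
rewrite /push -/(push q1 f) -(sum_cover _ (push_fs q1 fs) us'); last first.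
  move=> w /(push_nz fs) [u [hu <-]]; rewrite mem_undup map_f // Hs //.
under eq_bigr do rewrite /push big_mkcond /=.
rewrite exchange_big /= [RHS]big_mkcond /=; apply: eq_bigr => u _.
rewrite -big_mkcondr /=.
rewrite (eq_bigl (fun w => (w == q1 u) && (q2 (q1 u) == v))); last first.
  move=> w /=; case: (w =P q1 u) => [->|ne]; first by rewrite eqxx andbT.
  by case: (q1 u =P w) => [e|_]; [case: ne | rewrite andbF].
case: (q2 (q1 u) == v); last by rewrite big_pred0 // => w; rewrite andbF.
under eq_bigl do rewrite andbT.
case fu: (f u == 0); first by rewrite (eqP fu) big1.
rewrite sum_pick // mem_undup map_f // Hs fu //.
Qed.

Hypothesis lt_trans : forall a b c, lt a b -> lt b c -> lt a c.

Lemma r_id a u : Pa a u -> r a u = u.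
Proof.
case=> h1 _ _; apply/funext => c; rewrite /r; case: asboolP => // hc.
by case E: (u c) => [n|//]; case: hc; apply/h1; rewrite E.
Qed.

Lemma r_comp a b u : (forall c, lt c a -> lt c b) -> r a (r b u) = r a u.
Proof.
move=> h; apply/funext => c; rewrite /r; case: asboolP => // /h hc.
by case: asboolP.
Qed.

Lemma r_P b c u : ole lt b c -> Pa c u -> Pa b (r b u).
Proof.
move=> hbc [h1 h2 h3]; split.
- move=> d; rewrite /r; case: asboolP => hd; split => // _.
  apply/h1; case: hbc => [<- //|]; exact: lt_trans.
- move=> d d' n; rewrite /r; case: asboolP => _ //; case: asboolP => _ //; exact: h2.
- move=> N; have [n [hn hu]] := h3 N; exists n; split => // d; rewrite /r.
  by case: asboolP.
Qed.

Lemma ext_lt a b u : lt a b -> countable_set (fun c => lt c b) -> Pa a u ->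
  exists v, Pa b v /\ r a v = u.
Proof.
move=> hab [f hf] [h1 h2 h3].
pose next N := projT1 (cid (h3 N)).
have nextP N : (N <= next N)%N /\ forall c, u c <> Some (next N) by exact: (projT2 (cid (h3 N))).
pose fix en k := if k is k'.+1 then next (en k').+1 else next 0.
have enP k : forall c, u c <> Some (en k) by case: k => [|k] /=; apply nextP.
have enS k : (en k < en k.+1)%N by rewrite /=; have [+ _] := nextP (en k).+1.
have en_lt k l : (k < l)%N -> (en k < en l)%N.
  elim: l => // l IH; rewrite ltnS leq_eqVlt => /orP [/eqP ->|/IH h] //.
  exact: ltn_trans h (enS l).
have en_ge k : (k <= en k)%N.
  elim: k => [//|k IH]; exact: leq_ltn_trans IH (enS k).
have en_inj k l : en k = en l -> k = l.
  move=> e; case: (ltngtP k l) => // /en_lt; rewrite e ltnn //.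
pose v : W := fun c => if `[< lt c a >] then u c else
   if `[< lt c b >] then Some (en (2 * f c)%N) else None.
exists v; split; last first.
  apply/funext => c; rewrite /r /v; case: asboolP => // hc.
  by case E: (u c) => [n|//]; case: hc; apply/h1; rewrite E.
split.
- move=> c; rewrite /v; case: asboolP => hca.
    split=> [_|_]; [exact/h1 | exact: lt_trans hca hab].
  by case: asboolP.
- move=> c c' n; rewrite /v.
  have [hca|hca] := pselect (lt c a); have [hc'a|hc'a] := pselect (lt c' a);
  rewrite ?(asboolT hca) ?(asboolF hca) ?(asboolT hc'a) ?(asboolF hc'a).
  + exact: h2.
  + case: asboolP => // _ E [] E'; by move: (enP (2 * f c')%N c); rewrite E E'.
  + case: asboolP => // _ [] E E'; by move: (enP (2 * f c)%N c'); rewrite E' E.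
  + case: asboolP => // hcb; case: asboolP => // hc'b [] <- [] /en_inj e.
    apply: hf => //; lia.
- move=> N; exists (en (2 * N).+1); split; first by have := en_ge (2 * N).+1; lia.
  move=> c; rewrite /v; case: asboolP => _; first exact: enP.
  case: asboolP => // _ [] E; move: (en_inj (2 * f c)%N (2 * N).+1 E); lia.
Qed.


Lemma ole_sub a b : ole lt a b -> forall c, lt c a -> lt c b.
Proof. by case=> [<- //|hab] c hc; exact: lt_trans hc hab. Qed.

Lemma dval_nz a (x : Dty a) u : dval x u != 0 -> Pa a u.
Proof.
move=> h; case: (pselect (Pa a u)) => // hn.
by have [_ /(_ u hn) e] := dvalP x; rewrite e eqxx in h.
Qed.

Lemma proj_id a f : (forall w, ~ Pa a w -> f w = 0) -> proj a f = f.
Proof. by move=> h; apply/funext => v; rewrite /proj; case: asboolP => // /h ->. Qed.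

Lemma dval_gl a b (x : Dty b) : dval (gl a b x) = gfun a (dval x). Proof. by []. Qed.

Lemma g_id a (x : Dty a) : gl a a x = x.
Proof.
apply: dval_inj; rewrite dval_gl gfunE push_id; first by apply: proj_id; case: (dvalP x).
  by case: (dvalP x).
by move=> u /dval_nz /r_id.
Qed.

Lemma g_comp a b c (x : Dty c) : ole lt a b -> ole lt b c ->
  gl a b (gl b c x) = gl a c x.
Proof.
move=> hab hbc; apply: dval_inj; rewrite !dval_gl !gfunE.
have fs := proj1 (dvalP x).
rewrite (@proj_id b (push (r b) (dval x))); last first.
  move=> w hw; case: (push (r b) (dval x) w =P 0) => // /eqP /(push_nz fs) [u [hu e]].
  by case: hw; rewrite -e; apply: r_P hbc _; apply: dval_nz hu.
by rewrite push_push // (push_ext (q' := r a) fs) // => u _ /=; rewrite r_comp //; apply: ole_sub.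
Qed.

Hypothesis Hcount : forall a, countable_set (fun b => lt b a).

Lemma ext_ole a b u : ole lt a b -> Pa a u -> exists v, Pa b v /\ r a v = u.
Proof.
case=> [<- hu|hab hu]; first by exists u; split => //; apply: r_id.
exact: ext_lt hab (Hcount b) hu.
Qed.

Lemma g_surj a b : ole lt a b -> forall y : Dty a, exists x : Dty b, gl a b x = y.
Proof.
move=> hab y.
pose e (u : W) : W := match pselect (Pa a u) with
  | left h => projT1 (cid (ext_ole hab h)) | right _ => u end.
have eP u : Pa a u -> Pa b (e u) /\ r a (e u) = u.
  by rewrite /e => h; case: pselect => // h'; exact: (projT2 (cid (ext_ole hab h'))).
have fs := proj1 (dvalP y).
have hx : push e (dval y) \in fsq b.
  apply/asboolP; split; first exact: push_fs.
  move=> w hw; case: (push e (dval y) w =P 0) => // /eqP /(push_nz fs) [u [hu ee]].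
  by case: hw; rewrite -ee; exact: (proj1 (eP u (dval_nz hu))).
exists (DMk hx); apply: dval_inj; rewrite dval_gl gfunE /= push_push //.
rewrite push_id //; first by apply: proj_id; case: (dvalP y).
by move=> u /dval_nz /eP [].
Qed.


Definition Ia a := {u : W | Pa a u}.
HB.instance Definition _ a := gen_eqMixin (Ia a).

Definition delta (u : W) (m : M) : W -> M := fun w => if w == u then m else 0.

Lemma delta_fsq a (i : Ia a) m : delta (sval i) m \in fsq a.
Proof.
apply/asboolP; split.
  by exists [:: sval i] => w; rewrite inE /delta => /negPf ->.
by move=> w hw; rewrite /delta; case: eqP => // e; case: hw; rewrite e; exact: (proj2_sig i).
Qed.

Definition emap a (i : Ia a) (m : M) : Dty a := DMk (delta_fsq i m).

Lemma emap_is_linear a (i : Ia a) : linear (@emap a i).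
Proof.
move=> k x y; apply: dval_inj => /=; apply/funext => w.
change (delta (sval i) (k *: x + y) w = k *: delta (sval i) x w + delta (sval i) y w).
by rewrite /delta; case: eqP => _; rewrite ?scaler0 ?addr0.
Qed.
HB.instance Definition _ a i := GRing.isSemilinear.Build R M (Dty a) _ (@emap a i)
  (GRing.semilinear_linear (@emap_is_linear a i)).
Definition el a (i : Ia a) : {linear M -> Dty a} := @emap a i.

Lemma dval_sum a I (s : seq I) (F : I -> Dty a) :
  dval (\sum_(i <- s) F i) = \sum_(i <- s) dval (F i).
Proof. by elim: s => [|i s IH]; rewrite ?big_nil ?big_cons //= -IH. Qed.

Lemma Ia_eq a (i j : Ia a) : (sval i == sval j) = (i == j).
Proof.
apply/eqP/eqP => [|-> //]; case: i j => [u hu] [v hv] /= e; subst v.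
by congr exist; apply: Prop_irrelevance.
Qed.

Lemma sum_eval a (m : Ia a -> M) (s : seq (Ia a)) (i : Ia a) : fin_supp m s ->
  dval (\sum_(j <- s) el j (m j)) (sval i) = m i.
Proof.
move=> [us hs]; rewrite dval_sum fct_sumE.
under eq_bigr do rewrite [dval _]/= /delta Ia_eq.
rewrite -big_mkcond /=.
case hi: (i \in s).
  have ef : [seq j <- s | i == j] = [seq j <- s | pred1 i j].
    by apply: eq_filter => j /=; rewrite eq_sym.
  by rewrite -big_filter ef filter_pred1_uniq ?big_seq1.
rewrite hs ?hi // big_seq_cond big1 // => j /andP [hj /eqP ij].
by move: hi; rewrite ij hj.
Qed.

Lemma dsum a : is_direct_sum_of_copies M (Dty a).
Proof.
exists (Ia a : eqType), (@el a); split; last first.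
  move=> m m' s s' hm hm' e; apply/funext => i.
  by rewrite -(sum_eval i hm) -(sum_eval i hm') e.
move=> d; pose toI (w : W) : option (Ia a) :=
  match pselect (Pa a w) with left h => Some (exist _ w h) | right _ => None end.
pose s := undup (pmap toI (supp (dval d))).
have fs := proj1 (dvalP d).
have hfs : fin_supp (fun i : Ia a => dval d (sval i)) s.
  split; first exact: undup_uniq.
  move=> i; rewrite mem_undup mem_pmap; apply: contraNeq => h.
  apply/mapP; exists (sval i); first by have [_ ->] := suppP fs.
  rewrite /toI; case: pselect => [h'|/(_ (proj2_sig i)) //].
  congr Some; case: i h h' => u hu /= _ h'; congr exist; apply: Prop_irrelevance.
exists (fun i => dval d (sval i)), s; split => //.
apply: dval_inj; apply/funext => w.
case: (pselect (Pa a w)) => hw.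
  by rewrite -[w]/(sval (exist _ w hw : Ia a)) sum_eval.
have [_ ->] := dvalP d; last exact: hw.
rewrite dval_sum fct_sumE big1 // => i _ /=; rewrite /delta; case: eqP => // e.
by case: hw; rewrite e; exact: (proj2_sig i).
Qed.


Hypothesis lt_total : forall a b, lt a b \/ a = b \/ lt b a.
Hypothesis Hunc : ~ countable_set (fun _ : A => True).

Lemma no_max c : exists b, lt c b.
Proof.
case: (pselect (exists b, lt c b)) => // hn; exfalso; apply: Hunc.
have [f hf] := Hcount c.
exists (fun b => match pselect (b = c) with left _ => 0%N | right _ => (f b).+1 end).
move=> b b' _ _; case: pselect => [->|nb]; case: pselect => [->|nb'] //.
move=> [] /hf; apply.
- by case: (lt_total b c) => [//|[//|h]]; case: hn; exists b.
- by case: (lt_total b' c) => [//|[//|h]]; case: hn; exists b'.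
Qed.

Lemma above2 c d : exists b, lt c b /\ lt d b.
Proof.
case: (lt_total c d) => [h|[<-|h]].
- by have [b hb] := no_max d; exists b; split => //; apply: lt_trans h hb.
- by have [b hb] := no_max c; exists b.
- by have [b hb] := no_max c; exists b; split => //; apply: lt_trans h hb.
Qed.

Lemma bound (k : A -> nat) : (forall a b, ole lt a b -> (k a <= k b)%N) ->
  exists K, forall b, (k b <= K)%N.
Proof.
move=> km; case: (pselect (exists K, forall b, (k b <= K)%N)) => // hn; exfalso.
have hK : forall K, exists b, (K < k b)%N.
  move=> K; case: (pselect (exists b, (K < k b)%N)) => // hb; case: hn; exists K => b.
  by rewrite leqNgt; apply/negP => h; apply: hb; exists b.
pose an n := projT1 (cid (hK n)).
have anP n : (n < k (an n))%N by exact: (projT2 (cid (hK n))).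
pose fn n := projT1 (cid (Hcount (an n))).
have fnP n : forall x y, lt x (an n) -> lt y (an n) -> fn n x = fn n y -> x = y.
  exact: (projT2 (cid (Hcount (an n)))).
have below b : lt b (an (k b)).
  have := anP (k b); case: (lt_total b (an (k b))) => [//|[<-|h]]; first by rewrite ltnn.
  by have := km _ _ (or_intror h); rewrite leqNgt => /negP.
apply: Hunc; exists (fun b => pickle (k b, fn (k b) b)) => b b' _ _ /(pcan_inj pickleK) [] e1.
by rewrite e1 => /fnP; apply => //; rewrite -e1; exact: below.
Qed.

Lemma max_att (k : A -> nat) (a0 : A) K : (forall b, (k b <= K)%N) ->
  exists g, forall b, (k b <= k g)%N.
Proof.
elim: K => [|K IH] hb.
  by exists a0 => b; have := hb b; rewrite leqn0 => /eqP ->.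
case: (pselect (exists g, k g = K.+1)) => [[g hg]|hn].
  by exists g => b; rewrite hg.
apply: IH => b; have := hb b; rewrite leq_eqVlt ltnS => /orP [/eqP e|//].
by case: hn; exists b.
Qed.

Lemma uniq_map_inj (q : W -> W) s u u' : uniq (map q s) -> u \in s -> u' \in s ->
  q u = q u' -> u = u'.
Proof.
elim: s => [//|w s IH] /= /andP [hn hu]; rewrite !inE.
case/orP => [/eqP ->|hus]; case/orP => [/eqP ->|hus'] // e.
- by move: hn; rewrite e map_f.
- by move: hn; rewrite -e map_f.
- exact: IH.
Qed.

Section Thread.
Variable x : forall a, Dty a.
Hypothesis hx : is_thread lt (@gl) x.

Let F b := supp (dval (x b)).
Let k b := size (F b).

Lemma Fu b : uniq (F b). Proof. exact: (proj1 (suppP (proj1 (dvalP (x b))))). Qed.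
Lemma FE b w : (w \in F b) = (dval (x b) w != 0).
Proof. exact: (proj2 (suppP (proj1 (dvalP (x b))))). Qed.

Lemma sub_map a b : ole lt a b -> {subset F a <= map (r a) (F b)}.
Proof.
move=> hab v; rewrite FE -(hx hab) dval_gl gfunE /proj; case: asboolP => _; last by rewrite eqxx.
move/(push_nz (proj1 (dvalP (x b)))) => [u [hu <-]]; apply: map_f; by rewrite FE.
Qed.

Lemma k_mono a b : ole lt a b -> (k a <= k b)%N.
Proof.
move=> hab; rewrite /k; apply: leq_trans (_ : size (undup (map (r a) (F b))) <= _)%N.
  by apply: uniq_leq_size; [exact: Fu | move=> v /(sub_map hab); rewrite mem_undup].
by rewrite -(size_map (r a)) size_undup.
Qed.

Lemma lim0_aux a0 : x a0 != 0 -> False.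
Proof.
move=> nz.
have [K hK] := bound k_mono.
have [g hg] := max_att a0 hK.
have stab a : ole lt g a -> k a = k g.
  by move=> h; apply/eqP; rewrite eqn_leq hg k_mono.
have ka0 : (0 < k a0)%N.
  rewrite /k lt0n size_eq0; apply: contra nz => /eqP F0; apply/eqP; apply: dval_inj.
  apply/funext => w /=; apply/eqP; apply: negbNE; rewrite -FE F0 //.
have kg : (0 < k g)%N by apply: leq_trans ka0 (hg a0).
have stab2 a b : ole lt g a -> ole lt a b ->
  (forall u, u \in F b -> r a u \in F a) /\ uniq (map (r a) (F b)).
  move=> hga hab.
  have hsz : k a = k b by rewrite (stab a hga) (stab b); [|case: hga hab => [<- //|h] [<-|h']; right => //; apply: lt_trans h h'].
  have sub1 : {subset F a <= undup (map (r a) (F b))}.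
    by move=> v /(sub_map hab); rewrite mem_undup.
  have sz1 : (size (undup (map (r a) (F b))) <= size (F a))%N.
    by rewrite -/(k a) hsz /k -(size_map (r a)) size_undup.
  have [esz eqm] := uniq_min_size (Fu a) sub1 sz1.
  split; first by move=> u hu; rewrite eqm mem_undup map_f.
  apply: (leq_size_uniq (s1 := undup (map (r a) (F b)))); first exact: undup_uniq.
    by move=> v; rewrite mem_undup.
  by rewrite -esz size_map -/(k a) hsz.
have gg : ole lt g g by left.
pose u0 := nth (fun _ => None) (F g) 0.
have u0F : u0 \in F g by apply: mem_nth.
have lift b : ole lt g b -> exists u, u \in F b /\ r g u = u0.
  by move=> h; have /mapP [u hu e] := sub_map h u0F; exists u.
have key b b' c u u' : ole lt g b -> ole lt g b' -> lt c b -> lt c b' ->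
   u \in F b -> u' \in F b' -> r g u = u0 -> r g u' = u0 -> u c = u' c.
  have gen : forall b b' c u u', ole lt g b -> ole lt b b' -> lt c b ->
     u \in F b -> u' \in F b' -> r g u = u0 -> r g u' = u0 -> u c = u' c.
    move=> {}b {}b' {}c {}u {}u' hgb hbb' hcb hu hu' e e'.
    have [hin _] := stab2 _ _ hgb hbb'.
    have [_ huniq] := stab2 _ _ gg hgb.
    have e2 : r b u' = u.
      apply: (uniq_map_inj huniq) => //; first exact: hin.
      by rewrite e r_comp ?e' //; apply: ole_sub.
    by rewrite -e2 /r; case: asboolP.
  move=> hgb hgb' hcb hcb' hu hu' e e'.
  case: (lt_total b b') => [h|[h|h]].
  - exact: gen hgb (or_intror h) hcb hu hu' e e'.
  - by subst b'; apply: gen hgb (or_introl erefl) hcb hu hu' e e'.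
  - by apply/esym; apply: gen hgb' (or_intror h) hcb' hu' hu e' e.
have ab c : exists b, lt c b /\ ole lt g b.
  by have [b [h1 h2]] := above2 c g; exists b; split => //; right.
pose bc c := projT1 (cid (ab c)).
have bcP c : lt c (bc c) /\ ole lt g (bc c) by exact: (projT2 (cid (ab c))).
pose uc c := projT1 (cid (lift (bc c) (proj2 (bcP c)))).
have ucP c : uc c \in F (bc c) /\ r g (uc c) = u0 by exact: (projT2 (cid (lift (bc c) (proj2 (bcP c))))).
apply: Hunc; exists (fun c => if uc c c is Some n then n else 0%N) => c c' _ _.
have [b [hcb hc'b]] := above2 c c'.
have [b2 [hbb2 hgb2]] := ab b.
have hcb2 : lt c b2 by apply: lt_trans hcb hbb2.
have hc'b2 : lt c' b2 by apply: lt_trans hc'b hbb2.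
have [u [hu eu]] := lift b2 hgb2.
have Pu : Pa b2 u by apply: (@dval_nz b2 (x b2)); rewrite -FE.
have -> : uc c c = u c.
  by apply: key (proj2 (bcP c)) hgb2 (proj1 (bcP c)) hcb2 (proj1 (ucP c)) hu (proj2 (ucP c)) eu.
have -> : uc c' c' = u c'.
  by apply: key (proj2 (bcP c')) hgb2 (proj1 (bcP c')) hc'b2 (proj1 (ucP c')) hu (proj2 (ucP c')) eu.
case: Pu => h1 h2 _.
case E: (u c) => [n|]; last by have /h1 := hcb2; rewrite E.
case E': (u c') => [n'|]; last by have /h1 := hc'b2; rewrite E'.
move=> e; subst n'; exact: h2 E E'.
Qed.

End Thread.

End Constr.

Lemma wf_min (A : Type) (lt : A -> A -> Prop) : well_founded lt ->
  forall a : A, exists m, forall b, ~ lt b m.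
Proof.
move=> wf a; elim/(well_founded_ind wf): a => a IH.
case: (pselect (exists b, lt b a)) => [[b hb]|hn]; first exact: IH hb.
by exists a => b hb; apply: hn; exists b.
Qed.

Unset Implicit Arguments.
Set Strict Implicit.

Theorem mainTheorem3 (R : pzRingType) (M : lmodType R)
  (A : Type) (lt : A -> A -> Prop) (hA : is_omega1 lt) :
  exists (D : A -> lmodType R) (g : forall a b, {linear D b -> D a}),
    [/\ inverse_system lt g,
        (forall a b, ole lt a b -> forall y : D a, exists x : D b, g a b x = y),
        (forall a, is_direct_sum_of_copies M (D a)),
        limit_is_zero lt g
      & ((exists x : M, x <> 0) ->
           mittag_leffler lt g /\ ~ strict_mittag_leffler lt g)].
Proof.
case: hA => [hirr [htr [htot [hwf [hunc hcnt]]]]].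
exists (@Dty R M A lt), (@gl R M A lt).
have lim0 : limit_is_zero lt (@gl R M A lt).
  move=> x hx a; case: (x a =P 0) => // /eqP nz; exfalso.
  exact: (lim0_aux htr hcnt htot hunc hx nz).
split => //.
- split; first exact: g_id.
  by move=> a b c hab hbc x; apply: g_comp.
- exact: g_surj.
- move=> a; exact: dsum.
move=> [m0 hm0]; split.
  move=> i; exists i; split; first by left.
  move=> k hk y; split => _; last by exists y; apply: g_id.
  exact: g_surj.
move=> hs.
have [a0 _] : exists a : A, True.
  case: (pselect (exists a : A, True)) => // hn; case: hunc; exists (fun _ => 0%N).
  by move=> x; case: hn; exists x.
have [mn hmn] := wf_min hwf a0.
have Pe : Pa lt mn (fun _ => None).
  split => [b|//|N]; last by exists N.
  by split => // /hmn.
pose y := @el R M A lt mn (exist _ (fun _ : A => None) Pe : Ia lt mn) m0.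
have [j [hj /(_ y) [hy _]]] := hs mn.
have [x [hx e]] := hy (g_surj htr hcnt hj y).
have : x mn = 0 by apply: lim0.
rewrite e => /(congr1 (fun z => dval z (fun _ => None))) /=.
by rewrite /delta eqxx.
Qed.
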